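(* Let $M$ be a semigroup and let $f:M^I\to\mathbb N$ be a map such that $f(I)=0$ and $f(m'mm'')\ge f(m)$ for all $m,m',m''\in M^I$. Define $D:\mathrm{Rh}(M^I)\times\mathrm{Rh}(M^I)\to\overline{\mathbb N}$ by $D(\sigma,\tau)=f(\sigma\wedge_{\mathcal L}\tau)$ if $\sigma\ne\tau$ and $D(\sigma,\sigma)=1+\sup f$ (interpreted as $\omega$ if $f$ is unbounded). Then (i) $D$ is a strict length function for $\mathrm{Rh}(M^I)$; (ii) $D=D_\chi$ for some strongly faithful elliptic $\mathrm{Rh}(M^I)$-tree $\chi$, unique up to isomorphism.
   Context: $M^I$ denotes $M$ with a new identity $I$ adjoined (even if $M$ is already a monoid). For a monoid $N$: $a\le_{\mathcal L}b$ iff $a\in Nb$; $a\,\mathcal L\,b$ iff $a\le_{\mathcal L}b$ and $b\le_{\mathcal L}a$; $a<_{\mathcal L}b$ iff $a\le_{\mathcal L}b$ and not $a\,\mathcal L\, b$. The Rhodes expansion $\mathrm{Rh}(N)$ is the set of finite chains $(n_k<_{\mathcal L}\cdots<_{\mathcal L}n_1<_{\mathcal L}n_0=1)$, $k\ge0$, with product $\sigma\tau=\mathrm{lm}(n_kn'_l\le_{\mathcal L}\cdots\le_{\mathcal L}n_1n'_l\le_{\mathcal L}n'_l<_{\mathcal L}\cdots<_{\mathcal L}n'_0=1)$ for $\sigma=(n_k<\cdots<n_0)$, $\tau=(n'_l<\cdots<n'_0)$, where $\mathrm{lm}$ keeps, in each block of $\mathcal L$-equivalent terms, only the leftmost one;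 it is a monoid with identity $(1)$. For $\sigma=(m_k<_{\mathcal L}\cdots<_{\mathcal L}m_0=I)$, $\tau=(m'_l<_{\mathcal L}\cdots<_{\mathcal L}m'_0=I)$ in $\mathrm{Rh}(M^I)$, $\sigma\wedge_{\mathcal L}\tau=m_r$ where $r$ is the largest $i\le\min\{k,l\}$ with $m_j=m'_j$ for $j<i$ and $m_i\,\mathcal L\,m'_i$. Length functions: $D:S\times S\to\mathbb N\cup\{\omega\}$ with (L1) $D(m,m')=D(m',m)$, (L2) $D(m',m'')\le D(m,m)$, (L3) $D(m',m'')\le D(m'm,m''m)$, (L4) $D(m,m'')\ge\min\{D(m,m'),D(m',m'')\}$; strict: (L5) $D(m',m'')=D(m,m)\Rightarrow m'=m''$. Elliptic $S$-tree $\chi=(r_0,T,\alpha,\theta)$: uniform rooted tree (all maximal rays have the same length), maximal ray $\alpha$, monoid homomorphism $\theta$ from $S$ to the depth-preserving distance-non-increasing self-maps of the vertex set, with $\mathrm{Vert}(T)=\bigcup_i\alpha_iS$; strongly faithful if $\alpha s=\alpha s'\Rightarrow s=s'$; $D_\chi(s,s')=|\alpha s\wedge\alpha s'|$ (length of the longest common initial segment of the rays). Isomorphism: bijective elliptic contraction preserving the distinguished ray and commuting with the actions. *)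

(* Defs.v *)
From Stdlib Require Import List Arith Lia ClassicalEpsilon.
Import ListNotations.
Set Implicit Arguments.

Inductive natw : Type := Fin (n : nat) | Omega.

Definition lew (x y : natw) : Prop :=
  match x, y with
  | Fin a, Fin b => a <= b
  | _, Omega => True
  | Omega, Fin _ => False
  end.

Definition minw (x y : natw) : natw :=
  match x, y with
  | Fin a, Fin b => Fin (Nat.min a b)
  | Fin a, Omega => Fin a
  | Omega, y => y
  end.

Definition succw (x : natw) : natw :=
  match x with Fin a => Fin (S a) | Omega => Omega end.

(* least upper bound in N ∪ {ω} (always exists); chosen by classical epsilon *)
Definition is_lubw (P : natw -> Prop) (x : natw) : Prop :=
  (forall y, P y -> lew y x) /\ (forall z, (forall y, P y -> lew y z) -> lew x z).
Definition lubw (P : natw -> Prop) : natw := epsilon (inhabits Omega) (is_lubw P).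

Definition dec (P : Prop) : bool :=
  if excluded_middle_informative P then true else false.

Record Semigroup : Type := {
  sg_car :> Type;
  sg_mul : sg_car -> sg_car -> sg_car;
  sg_assoc : forall x y z, sg_mul x (sg_mul y z) = sg_mul (sg_mul x y) z }.

(* M^I : M with a new identity I adjoined; I is represented by None *)
Definition MI (M : Semigroup) : Type := option M.
Definition I_ {M : Semigroup} : MI M := None.

Definition mulI {M : Semigroup} (x y : MI M) : MI M :=
  match x, y with
  | None, _ => y
  | _, None => x
  | Some a, Some b => Some (sg_mul M a b)
  end.

Definition leL {M : Semigroup} (a b : MI M) : Prop := exists c, a = mulI c b.
Definition eqL {M : Semigroup} (a b : MI M) : Prop := leL a b /\ leL b a.
Definition ltL {M : Semigroup} (a b : MI M) : Prop := leL a b /\ ~ eqL a b.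

(* ---------- Rhodes expansion Rh(M^I) ----------
   A chain (n_k <_L ... <_L n_1 <_L n_0 = I) is represented by the list
   [n_0; n_1; ...; n_k] (top element first). *)
Fixpoint schain {M : Semigroup} (l : list (MI M)) : Prop :=
  match l with
  | x :: ((y :: _) as r) => ltL y x /\ schain r
  | _ => True
  end.

Definition is_Rh {M : Semigroup} (l : list (MI M)) : Prop :=
  (exists t, l = I_ :: t) /\ schain l.

Definition Rh (M : Semigroup) : Type := { l : list (MI M) | is_Rh l }.

(* lm: in each block of consecutive L-equivalent terms keep only the leftmost
   one in the paper's (bottom-first) notation, i.e. the last one in our
   top-first list. *)
Fixpoint lm {M : Semigroup} (l : list (MI M)) : list (MI M) :=
  match l with
  | x :: ((y :: _) as r) => if dec (eqL x y) then lm r else x :: lm r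
  | _ => l
  end.

(* the list (n'_0 , ..., n'_l , n_1 n'_l , ..., n_k n'_l) (top first), then lm *)
Definition Rh_prod_list {M : Semigroup} (s t : list (MI M)) : list (MI M) :=
  lm (t ++ map (fun x => mulI x (last t I_)) (tl s)).

Lemma mulI_assoc (M : Semigroup) (x y z : MI M) :
  mulI x (mulI y z) = mulI (mulI x y) z.
Proof.
  destruct x as [x|], y as [y|], z as [z|]; simpl; try reflexivity.
  rewrite sg_assoc; reflexivity.
Qed.

Lemma leL_refl (M : Semigroup) (a : MI M) : leL a a.
Proof. exists None; destruct a; reflexivity. Qed.

Lemma leL_trans (M : Semigroup) (a b c : MI M) : leL a b -> leL b c -> leL a c.
Proof.
  intros [x Hx] [y Hy]; exists (mulI x y); subst; apply mulI_assoc.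
Qed.

Lemma eqL_sym (M : Semigroup) (a b : MI M) : eqL a b -> eqL b a.
Proof. intros [H1 H2]; split; assumption. Qed.

Lemma eqL_trans (M : Semigroup) (a b c : MI M) : eqL a b -> eqL b c -> eqL a c.
Proof.
  intros [H1 H2] [H3 H4]; split; eapply leL_trans; eassumption.
Qed.

Lemma eqL_I (M : Semigroup) (x : MI M) : eqL x I_ -> x = I_.
Proof.
  intros [_ [c Hc]]. destruct c, x; simpl in Hc; try discriminate; reflexivity.
Qed.

Fixpoint wchain {M : Semigroup} (l : list (MI M)) : Prop :=
  match l with
  | x :: ((y :: _) as r) => leL y x /\ wchain r
  | _ => True
  end.

Lemma lm_spec (M : Semigroup) (l : list (MI M)) :
  wchain l -> schain (lm l) /\
  (forall x t, l = x :: t -> exists h t', lm l = h :: t' /\ eqL h x).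
Proof.
  induction l as [|x r IH].
  - intros _; split; [exact I| intros x t H; discriminate].
  - destruct r as [|y r'].
    + intros _; split; [exact I|].
      intros x0 t H; injection H as <- <-; exists x, []; split;
        [reflexivity| split; apply leL_refl].
    + intros [Hyx Hw]. destruct (IH Hw) as [Hs Hh].
      destruct (Hh y r' eq_refl) as [h [t' [Ht' Hhy]]].
      split.
      * change (schain (if dec (eqL x y) then lm (y :: r') else x :: lm (y :: r'))).
        unfold dec; destruct (excluded_middle_informative (eqL x y)) as [E|E].
        -- exact Hs.
        -- rewrite Ht' in *. simpl. split; [|exact Hs]. split.
           ++ eapply leL_trans; [apply Hhy|exact Hyx].
           ++ intros Hhx. apply E. eapply eqL_trans; [apply eqL_sym; exact Hhx| exact Hhy].
      * intros x0 t H; injection H as <- <-.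
        change (exists h0 t0, (if dec (eqL x y) then lm (y :: r') else x :: lm (y :: r'))
                 = h0 :: t0 /\ eqL h0 x).
        unfold dec; destruct (excluded_middle_informative (eqL x y)) as [E|E].
        -- exists h, t'; split; [exact Ht'|].
           eapply eqL_trans; [exact Hhy| apply eqL_sym; exact E].
        -- exists x, (lm (y :: r')); split; [reflexivity| split; apply leL_refl].
Qed.

Lemma schain_wchain (M : Semigroup) (l : list (MI M)) : schain l -> wchain l.
Proof.
  induction l as [|x r IH]; [auto|].
  destruct r as [|y r']; [auto|].
  intros [[H _] Hs]; split; [exact H| apply IH; exact Hs].
Qed.

Lemma wchain_tl (M : Semigroup) (l : list (MI M)) : wchain l -> wchain (tl l).
Proof. destruct l as [|x [|y r]]; simpl; tauto. Qed.

Lemma wchain_map (M : Semigroup) (t : MI M) (l : list (MI M)) :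
  wchain l -> wchain (map (fun x => mulI x t) l).
Proof.
  induction l as [|x r IH]; [auto|].
  destruct r as [|y r']; [simpl; auto|].
  intros [[c Hc] Hw]. split.
  - exists c. rewrite Hc. symmetry; apply mulI_assoc.
  - apply IH; exact Hw.
Qed.

Lemma wchain_app (M : Semigroup) (a b : list (MI M)) (d : MI M) :
  a <> [] -> wchain a -> wchain b ->
  (match b with y :: _ => leL y (last a d) | [] => True end) ->
  wchain (a ++ b).
Proof.
  induction a as [|x a' IH]; [intros H; contradiction H; reflexivity|].
  intros _ Ha Hb Hj. destruct a' as [|x' a''].
  - simpl in *. destruct b as [|y b']; [exact I| split; assumption].
  - destruct Ha as [H1 H2]. change (wchain (x :: ((x' :: a'') ++ b))).
    simpl. split; [exact H1|]. apply IH; [discriminate|exact H2|exact Hb|exact Hj].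
Qed.

Lemma Rh_prod_ok (M : Semigroup) (s t : list (MI M)) :
  is_Rh s -> is_Rh t -> is_Rh (Rh_prod_list s t).
Proof.
  intros [_ Hs] [[t0 Ht] Htc].
  assert (W : wchain (t ++ map (fun x => mulI x (last t I_)) (tl s))).
  { apply wchain_app with (d := I_).
    - rewrite Ht; discriminate.
    - apply schain_wchain; exact Htc.
    - apply wchain_map, wchain_tl, schain_wchain; exact Hs.
    - destruct (tl s) as [|y r]; [exact I|]. simpl. exists y; reflexivity. }
  destruct (lm_spec _ W) as [Hc Hh].
  rewrite Ht in Hh. simpl in Hh.
  destruct (Hh I_ _ eq_refl) as [h [t' [E Hhi]]].
  apply eqL_I in Hhi. subst h.
  split; [exists t'; rewrite Ht; exact E| exact Hc].
Qed.

Definition Rh_mul (M : Semigroup) (s t : Rh M) : Rh M :=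
  exist _ (Rh_prod_list (proj1_sig s) (proj1_sig t))
        (Rh_prod_ok (proj2_sig s) (proj2_sig t)).

Lemma Rh_one_ok (M : Semigroup) : @is_Rh M [I_].
Proof. split; [exists []; reflexivity| exact I]. Qed.

Definition Rh_one (M : Semigroup) : Rh M := exist _ [I_] (Rh_one_ok M).

Definition meet_pred {M : Semigroup} (s t : list (MI M)) (r : nat) : Prop :=
  r < length s /\ r < length t /\
  (forall j, j < r -> nth j s I_ = nth j t I_) /\ eqL (nth r s I_) (nth r t I_).

Definition meet_index {M : Semigroup} (s t : list (MI M)) : nat :=
  epsilon (inhabits 0)
    (fun r => meet_pred s t r /\ forall r', meet_pred s t r' -> r' <= r).

Definition meetL {M : Semigroup} (s t : Rh M) : MI M :=
  nth (meet_index (proj1_sig s) (proj1_sig t)) (proj1_sig s) I_.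

Definition supw {X : Type} (f : X -> nat) : natw :=
  lubw (fun y => exists x, y = Fin (f x)).

Definition Dfun {M : Semigroup} (f : MI M -> nat) (s t : Rh M) : natw :=
  if dec (s = t) then succw (supw f) else Fin (f (meetL s t)).

Definition is_length_function {S : Type} (mul : S -> S -> S) (D : S -> S -> natw) : Prop :=
  (forall m m', D m m' = D m' m) /\                                   (* L1 *)
  (forall m m' m'', lew (D m' m'') (D m m)) /\                        (* L2 *)
  (forall m m' m'', lew (D m' m'') (D (mul m' m) (mul m'' m))) /\     (* L3 *)
  (forall m m' m'', lew (minw (D m m') (D m' m'')) (D m m'')).        (* L4 *)

Definition is_strict_length_function {S : Type} (mul : S -> S -> S) (D : S -> S -> natw) : Prop :=
  is_length_function mul D /\
  (forall m m' m'', D m' m'' = D m m -> m' = m'').                    (* L5 *)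

(* ---------- rooted trees ----------
   A rooted tree is given by its vertex type, root, parent map and depth;
   edges are {v, par v} for v <> root. *)
Record rtree : Type := {
  vert : Type;
  root : vert;
  par : vert -> vert;
  depth : vert -> nat;
  par_root : par root = root;
  depth_root : depth root = 0;
  depth_par : forall v, v <> root -> depth v = S (depth (par v)) }.

(* graph distance d(u,v) <= n *)
Definition dist_le (T : rtree) (u v : vert T) (n : nat) : Prop :=
  exists a b, a + b <= n /\ Nat.iter a (par T) u = Nat.iter b (par T) v.

Definition depth_pres (T1 T2 : rtree) (g : vert T1 -> vert T2) : Prop :=
  forall v, depth T2 (g v) = depth T1 v.

Definition dist_noninc (T1 T2 : rtree) (g : vert T1 -> vert T2) : Prop :=
  forall u v n, dist_le T1 u v n -> dist_le T2 (g u) (g v) n.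

(* a ray from the root of length len (alpha_0 = root, alpha_{i+1} child of alpha_i) *)
Definition is_ray (T : rtree) (len : natw) (a : nat -> vert T) : Prop :=
  a 0 = root T /\
  forall i, lew (Fin (S i)) len -> par T (a (S i)) = a i /\ a (S i) <> root T.

Definition is_maxray (T : rtree) (len : natw) (a : nat -> vert T) : Prop :=
  is_ray T len a /\
  forall len' a', is_ray T len' a' -> (forall i, lew (Fin i) len -> a' i = a i) ->
                  lew len' len.

Definition uniform (T : rtree) : Prop :=
  forall l1 a1 l2 a2, is_maxray T l1 a1 -> is_maxray T l2 a2 -> l1 = l2.

Record etree {S : Type} (mul : S -> S -> S) (one : S) : Type := {
  et_T : rtree;
  et_uniform : uniform et_T;
  et_len : natw;
  et_ray : nat -> vert et_T;                       (* alpha *)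
  et_ray_max : is_maxray et_T et_len et_ray;
  et_act : vert et_T -> S -> vert et_T;
  et_act_one : forall v, et_act v one = v;
  et_act_mul : forall v s t, et_act v (mul s t) = et_act (et_act v s) t;
  et_act_depth : forall s, depth_pres et_T et_T (fun v => et_act v s);
  et_act_dist : forall s, dist_noninc et_T et_T (fun v => et_act v s);
  et_vert : forall v, exists i s, lew (Fin i) et_len /\ v = et_act (et_ray i) s }.

Definition strongly_faithful {S : Type} {mul : S -> S -> S} {one : S}
  (chi : etree mul one) : Prop :=
  forall s s', (forall i, lew (Fin i) (et_len chi) ->
                 et_act chi (et_ray chi i) s = et_act chi (et_ray chi i) s') -> s = s'.

(* D_chi(s,s') = |alpha s ∧ alpha s'| *)
Definition Dchi {S : Type} {mul : S -> S -> S} {one : S}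
  (chi : etree mul one) (s s' : S) : natw :=
  lubw (fun y => exists i, y = Fin i /\ lew (Fin i) (et_len chi) /\
          forall j, j <= i -> et_act chi (et_ray chi j) s = et_act chi (et_ray chi j) s').

Definition etree_iso {S : Type} {mul : S -> S -> S} {one : S}
  (chi1 chi2 : etree mul one) : Prop :=
  exists phi : vert (et_T chi1) -> vert (et_T chi2),
    (forall x y, phi x = phi y -> x = y) /\
    (forall y, exists x, phi x = y) /\
    depth_pres (et_T chi1) (et_T chi2) phi /\
    dist_noninc (et_T chi1) (et_T chi2) phi /\
    (forall i, lew (Fin i) (et_len chi1) -> phi (et_ray chi1 i) = et_ray chi2 i) /\
    (forall v s, phi (et_act chi1 v s) = et_act chi2 (phi v) s).

(* Main.v *)
Require Import Defs.
From Stdlib Require Import List Arith Lia ClassicalEpsilon ProofIrrelevance FunctionalExtensionality PropExtensionality Classical.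
Import ListNotations.

Lemma dec_true (P : Prop) : P -> dec P = true.
Proof. intro H; unfold dec; destruct (excluded_middle_informative P); tauto. Qed.
Lemma dec_false (P : Prop) : ~ P -> dec P = false.
Proof. intro H; unfold dec; destruct (excluded_middle_informative P); tauto. Qed.
Lemma dec_iff (P Q : Prop) : (P <-> Q) -> dec P = dec Q.
Proof.
  intro H; destruct (classic P) as [p|np].
  - rewrite !dec_true; tauto.
  - rewrite !dec_false; tauto.
Qed.

Lemma eqL_refl {M : Semigroup} (a : MI M) : eqL a a.
Proof. split; apply leL_refl. Qed.

Lemma mulI_I_r {M : Semigroup} (x : MI M) : mulI x I_ = x.
Proof. destruct x; reflexivity. Qed.
Lemma mulI_I_l {M : Semigroup} (x : MI M) : mulI I_ x = x.
Proof. reflexivity. Qed.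

Lemma eqL_mulr {M : Semigroup} (a b p : MI M) : eqL a b -> eqL (mulI a p) (mulI b p).
Proof.
  intros [[c Hc] [d Hd]]; split.
  - exists c; rewrite Hc; symmetry; apply mulI_assoc.
  - exists d; rewrite Hd; symmetry; apply mulI_assoc.
Qed.

Lemma leL_mulr {M : Semigroup} (a b p : MI M) : leL a b -> leL (mulI a p) (mulI b p).
Proof. intros [c Hc]; exists c; rewrite Hc; symmetry; apply mulI_assoc. Qed.

Lemma leL_None {M : Semigroup} (x : MI M) : leL I_ x -> x = I_.
Proof. intros [c Hc]; destruct c, x; simpl in Hc; try discriminate; reflexivity. Qed.

Definition cons_lm {M : Semigroup} (x : MI M) (l : list (MI M)) : list (MI M) :=
  match l with [] => [x] | h :: _ => if dec (eqL x h) then l else x :: l end.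

Lemma lm_head {M : Semigroup} (x : MI M) z : exists h t, lm (x :: z) = h :: t /\ eqL h x.
Proof.
  revert x; induction z as [|y z IH]; intro x.
  - exists x, []; split; [reflexivity| apply eqL_refl].
  - destruct (IH y) as [h [t [E Hh]]].
    change (exists h0 t0, (if dec (eqL x y) then lm (y :: z) else x :: lm (y :: z)) = h0 :: t0 /\ eqL h0 x).
    destruct (classic (eqL x y)) as [Y|N].
    + rewrite dec_true by exact Y. exists h, t; split; [exact E|].
      eapply eqL_trans; [exact Hh| apply eqL_sym; exact Y].
    + rewrite dec_false by exact N. exists x, (lm (y :: z)); split; [reflexivity| apply eqL_refl].
Qed.

Lemma lm_cons {M : Semigroup} (x : MI M) z : lm (x :: z) = cons_lm x (lm z).
Proof.
  destruct z as [|y z]; [reflexivity|].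
  destruct (lm_head y z) as [h [t [E Hh]]].
  change ((if dec (eqL x y) then lm (y :: z) else x :: lm (y :: z)) = cons_lm x (lm (y :: z))).
  rewrite E; simpl.
  rewrite (dec_iff (eqL x y) (eqL x h)); [reflexivity|].
  split; intro H.
  - eapply eqL_trans; [exact H| apply eqL_sym; exact Hh].
  - eapply eqL_trans; [exact H| exact Hh].
Qed.

Lemma lm_nil {M : Semigroup} : @lm M [] = [].
Proof. reflexivity. Qed.

Lemma lm_cons_lm_fix {M : Semigroup} (x : MI M) L : lm L = L -> lm (cons_lm x L) = cons_lm x L.
Proof.
  intro HL. destruct L as [|h t]; [reflexivity|]. simpl.
  destruct (classic (eqL x h)) as [Y|N].
  - rewrite dec_true by exact Y. exact HL.
  - rewrite dec_false by exact N. rewrite lm_cons, HL. simpl. rewrite dec_false by exact N. reflexivity.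
Qed.

Lemma lm_idem {M : Semigroup} (l : list (MI M)) : lm (lm l) = lm l.
Proof.
  induction l as [|x l IH]; [reflexivity|].
  rewrite lm_cons. apply lm_cons_lm_fix, IH.
Qed.

Lemma lm_app {M : Semigroup} (a b : list (MI M)) : lm (a ++ b) = lm (a ++ lm b).
Proof.
  induction a as [|x a IH].
  - simpl; symmetry; apply lm_idem.
  - rewrite <- !app_comm_cons, !(lm_cons x), IH; reflexivity.
Qed.

Lemma lm_app_l {M : Semigroup} (a b : list (MI M)) : lm (a ++ b) = lm (lm a ++ b).
Proof.
  induction a as [|x a IH]; [reflexivity|].
  rewrite <- app_comm_cons, lm_cons, IH, (lm_cons x a).
  destruct (lm a) as [|h t]; [cbn [cons_lm app]; rewrite (lm_cons x b); reflexivity|].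
  cbn [cons_lm]. destruct (classic (eqL x h)) as [Y|N].
  - rewrite dec_true by exact Y.
    destruct (lm_head h (t ++ b)) as [h' [t' [E Hh]]].
    change (lm ((h :: t) ++ b)) with (lm (h :: t ++ b)). rewrite E. simpl.
    rewrite dec_true; [reflexivity|]. eapply eqL_trans; [exact Y| apply eqL_sym; exact Hh].
  - rewrite dec_false by exact N. rewrite <- (app_comm_cons (h :: t)), (lm_cons x). reflexivity.
Qed.

Lemma lm_map {M : Semigroup} (p : MI M) (l : list (MI M)) :
  lm (map (fun x => mulI x p) (lm l)) = lm (map (fun x => mulI x p) l).
Proof.
  induction l as [|x l IH]; [reflexivity|].
  rewrite lm_cons. simpl map at 2. rewrite (lm_cons (mulI x p)), <- IH.
  destruct (lm l) as [|h t]; [reflexivity|].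
  cbn [cons_lm]. destruct (classic (eqL x h)) as [Y|N].
  - rewrite dec_true by exact Y.
    destruct (lm_head (mulI h p) (map (fun x0 => mulI x0 p) t)) as [h' [t' [E Hh]]].
    cbn [map]. rewrite E. cbn [cons_lm]. rewrite dec_true; [reflexivity|].
    eapply eqL_trans; [apply eqL_mulr; exact Y| apply eqL_sym; exact Hh].
  - rewrite dec_false by exact N. cbn [map]. rewrite (lm_cons (mulI x p)). reflexivity.
Qed.

Lemma schain_tl {M : Semigroup} (x : MI M) l : schain (x :: l) -> schain l.
Proof. destruct l; simpl; tauto. Qed.

Lemma lm_schain {M : Semigroup} (l : list (MI M)) : schain l -> lm l = l.
Proof.
  induction l as [|x l IH]; [reflexivity|].
  intro H. rewrite lm_cons, IH by (eapply schain_tl; exact H).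
  destruct l as [|y l]; [reflexivity|].
  simpl. destruct H as [[_ N] _]. rewrite dec_false; [reflexivity|].
  intro E; apply N, eqL_sym, E.
Qed.

Lemma last_nonempty {A} (l : list A) d1 d2 : l <> [] -> last l d1 = last l d2.
Proof.
  induction l as [|x l IH]; [tauto|]. intros _.
  destruct l as [|y l]; [reflexivity|]. simpl in *. apply IH; discriminate.
Qed.

Lemma last_app_ne {A} (u v : list A) d : v <> [] -> last (u ++ v) d = last v d.
Proof.
  induction u as [|x u IH]; [reflexivity|]. intro Hv.
  simpl. rewrite <- IH by exact Hv. destruct u; simpl; [destruct v; [tauto|reflexivity]|reflexivity].
Qed.

Lemma lm_last {M : Semigroup} (l : list (MI M)) d : l <> [] -> last (lm l) d = last l d.
Proof.
  induction l as [|x l IH]; [tauto|]. intros _.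
  rewrite lm_cons. destruct l as [|y l]; [reflexivity|].
  destruct (lm_head y l) as [h [t [E _]]]. rewrite E. rewrite E in IH.
  simpl cons_lm. change (last (x :: y :: l) d) with (last (y :: l) d).
  rewrite <- IH by discriminate.
  destruct (dec (eqL x h)); reflexivity.
Qed.

Lemma last_map' {A B} (g : A -> B) l d : last (map g l) (g d) = g (last l d).
Proof.
  induction l as [|x l IH]; [reflexivity|].
  destruct l as [|y l]; [reflexivity|]. exact IH.
Qed.

Definition nonI {M : Semigroup} (l : list (MI M)) := Forall (fun x => x <> I_) l.

Lemma lm_nonI {M : Semigroup} (l : list (MI M)) : nonI l -> nonI (lm l).
Proof.
  induction l as [|x l IH]; [auto|]. intro H. inversion H; subst.
  rewrite lm_cons. specialize (IH H3). destruct (lm l) as [|h t]; simpl.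
  - constructor; auto.
  - destruct (dec (eqL x h)); [exact IH| constructor; auto].
Qed.

Lemma lm_I_cons {M : Semigroup} (l : list (MI M)) : nonI l -> lm (I_ :: l) = I_ :: lm l.
Proof.
  intro H. rewrite lm_cons. apply lm_nonI in H. destruct (lm l) as [|h t]; [reflexivity|].
  simpl. inversion H; subst. rewrite dec_false; [reflexivity|].
  intro E. apply H2. apply eqL_I, eqL_sym, E.
Qed.

Lemma schain_nonI {M : Semigroup} (x : MI M) l : schain (x :: l) -> nonI l.
Proof.
  revert x; induction l as [|y l IH]; intros x H; [constructor|].
  destruct H as [[Hle Hne] Hs]. constructor.
  - intro E; subst. apply leL_None in Hle. subst. apply Hne, eqL_refl.
  - eapply IH; exact Hs.
Qed.

Lemma map_nonI {M : Semigroup} (p : MI M) l : nonI l -> nonI (map (fun x => mulI x p) l).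
Proof.
  induction 1; constructor; auto. destruct x; [|tauto]. destruct p; simpl; discriminate.
Qed.

Lemma Rh_shape {M : Semigroup} (s : Rh M) : proj1_sig s = I_ :: tl (proj1_sig s) /\ nonI (tl (proj1_sig s)).
Proof.
  destruct s as [l [[t E] Hs]]; simpl. subst. split; [reflexivity|].
  eapply schain_nonI; exact Hs.
Qed.

Lemma Rh_eq {M : Semigroup} (s t : Rh M) : proj1_sig s = proj1_sig t -> s = t.
Proof.
  destruct s as [l Hl], t as [l' Hl']; simpl; intro E; subst. f_equal. apply proof_irrelevance.
Qed.

Lemma Rh_mul_one_r {M : Semigroup} (s : Rh M) : Rh_mul s (Rh_one M) = s.
Proof.
  apply Rh_eq.
  change (lm (I_ :: map (fun x => mulI x I_) (tl (proj1_sig s))) = proj1_sig s).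
  destruct (Rh_shape s) as [E _].
  assert (Hm : forall l : list (MI M), map (fun x => mulI x I_) l = l).
  { induction l; simpl; [reflexivity| rewrite mulI_I_r, IHl; reflexivity]. }
  rewrite Hm, <- E. apply lm_schain. exact (proj2 (proj2_sig s)).
Qed.

Lemma Rh_mul_one_l {M : Semigroup} (s : Rh M) : Rh_mul (Rh_one M) s = s.
Proof.
  apply Rh_eq.
  change (lm (proj1_sig s ++ []) = proj1_sig s). rewrite app_nil_r.
  apply lm_schain. exact (proj2 (proj2_sig s)).
Qed.

Lemma Rh_mul_assoc {M : Semigroup} (s t u : Rh M) :
  Rh_mul (Rh_mul s t) u = Rh_mul s (Rh_mul t u).
Proof.
  apply Rh_eq. cbn [Rh_mul proj1_sig]. unfold Rh_prod_list.
  destruct (Rh_shape s) as [Es Ns]. destruct (Rh_shape t) as [Et Nt].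
  destruct (Rh_shape u) as [Eu Nu].
  set (S' := tl (proj1_sig s)) in *. set (T' := tl (proj1_sig t)) in *.
  set (U := proj1_sig u) in *. rewrite Et.
  set (q := last (I_ :: T') I_). set (p := last U I_).
  rewrite <- app_comm_cons, (lm_I_cons (T' ++ _)) by (apply Forall_app; split; [exact Nt| apply map_nonI, Ns]).
  simpl tl.
  rewrite lm_app, lm_map, <- lm_app, map_app, app_assoc.
  rewrite <- (lm_app_l (U ++ _)).
  assert (HU : U <> []) by (rewrite Eu; discriminate).
  rewrite lm_last by (intro H; apply HU; destruct U; [reflexivity| discriminate]).
  rewrite map_map. f_equal. f_equal. apply map_ext. intro x.
  rewrite <- mulI_assoc. f_equal.
  destruct T' as [|y T''] eqn:ET.
  - simpl. rewrite app_nil_r. reflexivity.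
  - rewrite last_app_ne by discriminate.
    unfold q. change (last (I_ :: y :: T'') I_) with (last (y :: T'') I_).
    rewrite (last_nonempty (map _ (y :: T'')) I_ (mulI I_ p)) by discriminate.
    exact (eq_sym (last_map' (fun x0 => mulI x0 p) (y :: T'') I_)).
Qed.
Lemma lew_refl x : lew x x.
Proof. destruct x; simpl; auto. Qed.
Lemma lew_trans x y z : lew x y -> lew y z -> lew x z.
Proof. destruct x, y, z; simpl; intros; try lia; tauto. Qed.
Lemma lew_antisym x y : lew x y -> lew y x -> x = y.
Proof. destruct x, y; simpl; intros; try tauto. f_equal; lia. Qed.
Lemma lew_0 x : lew (Fin 0) x.
Proof. destruct x; simpl; auto; lia. Qed.
Lemma lew_succw x : lew x (succw x).
Proof. destruct x; simpl; auto. Qed.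
Lemma lew_Fin_le i j x : j <= i -> lew (Fin i) x -> lew (Fin j) x.
Proof. destruct x; simpl; auto; lia. Qed.

Lemma nat_least (Q : nat -> Prop) n : Q n -> exists m, Q m /\ forall k, Q k -> m <= k.
Proof.
  intro Hn. apply NNPP. intro Hno.
  assert (H : forall m, forall k, k <= m -> ~ Q k).
  { induction m as [|m IH]; intros k Hk Qk.
    - apply Hno. exists k; split; [exact Qk|]. intros; lia.
    - apply Hno. exists k; split; [exact Qk|]. intros k' Qk'.
      destruct (le_lt_dec k k') as [|Hlt]; [assumption|].
      exfalso; apply (IH k'); [lia| exact Qk']. }
  exact (H n n (le_n n) Hn).
Qed.

Lemma lub_exists (P : natw -> Prop) : exists x, is_lubw P x.
Proof.
  destruct (classic (P Omega)) as [PO|NPO].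
  - exists Omega; split; [intros y _; destruct y; exact I|].
    intros z Hz. apply Hz, PO.
  - destruct (classic (exists n, forall y, P y -> lew y (Fin n))) as [[n Hn]|Nb].
    + destruct (nat_least (fun n => forall y, P y -> lew y (Fin n)) n Hn) as [m [Hm Hmin]].
      exists (Fin m); split; [exact Hm|].
      intros z Hz. destruct z as [k|]; [|exact I]. simpl. apply Hmin, Hz.
    + exists Omega; split; [intros y _; destruct y; exact I|].
      intros z Hz. destruct z as [k|]; [|exact I]. exfalso; apply Nb; exists k; exact Hz.
Qed.

Lemma lubw_spec (P : natw -> Prop) : is_lubw P (lubw P).
Proof.
  unfold lubw. apply epsilon_spec. apply lub_exists.
Qed.

Lemma lubw_unique (P : natw -> Prop) x : is_lubw P x -> lubw P = x.
Proof.
  intros [H1 H2]. destruct (lubw_spec P) as [H3 H4].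
  apply lew_antisym; [apply H4, H1| apply H2, H3].
Qed.

Lemma lub_down (P : natw -> Prop) x :
  (forall y, P y <-> exists i, y = Fin i /\ lew (Fin i) x) -> lubw P = x.
Proof.
  intro HP. apply lubw_unique. split.
  - intros y Py. apply HP in Py. destruct Py as [i [-> Hi]]. exact Hi.
  - intros z Hz. destruct x as [n|].
    + apply Hz, HP. exists n; split; [reflexivity| apply lew_refl].
    + destruct z as [m|]; [|exact I]. exfalso.
      assert (H : lew (Fin (S m)) (Fin m)) by (apply Hz, HP; exists (S m); split; [reflexivity| exact I]).
      simpl in H; lia.
Qed.

Lemma lub_dc (P : natw -> Prop) (Q : nat -> Prop) i :
  (forall y, P y <-> exists j, y = Fin j /\ Q j) -> Q 0 ->
  (forall j k, k <= j -> Q j -> Q k) ->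
  (lew (Fin i) (lubw P) <-> Q i).
Proof.
  intros HP Q0 Qdc. destruct (lubw_spec P) as [Hub Hleast]. split.
  - intro Hi. apply NNPP. intro NQ.
    assert (Hi0 : i <> 0) by (intro; subst; tauto).
    assert (Hb : lew (lubw P) (Fin (pred i))).
    { apply Hleast. intros y Py. apply HP in Py. destruct Py as [j [-> Qj]].
      simpl. destruct (le_lt_dec i j) as [Hij|Hij]; [exfalso; apply NQ, (Qdc j i Hij Qj)| lia]. }
    pose proof (lew_trans _ _ _ Hi Hb) as H. simpl in H. lia.
  - intro Qi. apply Hub, HP. exists i; split; [reflexivity| exact Qi].
Qed.

Lemma max_exists (P : nat -> Prop) n :
  (forall r, P r -> r < n) -> (exists r, P r) -> exists r, P r /\ forall r', P r' -> r' <= r.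
Proof.
  revert P; induction n as [|n IH]; intros P Hb [r Pr].
  - specialize (Hb r Pr); lia.
  - destruct (classic (P n)) as [Pn|NPn].
    + exists n; split; [exact Pn|]. intros r' Pr'. specialize (Hb r' Pr'); lia.
    + apply IH; [|exists r; exact Pr].
      intros r' Pr'. specialize (Hb r' Pr'). destruct (Nat.eq_dec r' n); [subst; tauto| lia].
Qed.

Lemma meet_index_spec {M : Semigroup} (s t : list (MI M)) s' t' :
  s = I_ :: s' -> t = I_ :: t' ->
  meet_pred s t (meet_index s t) /\ forall r', meet_pred s t r' -> r' <= meet_index s t.
Proof.
  intros Es Et. unfold meet_index. apply epsilon_spec.
  apply (max_exists _ (length s)).
  - intros r [H _]; exact H.
  - exists 0. subst. split; [simpl; lia|]. split; [simpl; lia|]. split; [intros; lia|].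
    apply eqL_refl.
Qed.

Lemma Rh_meet_spec {M : Semigroup} (s t : Rh M) :
  meet_pred (proj1_sig s) (proj1_sig t) (meet_index (proj1_sig s) (proj1_sig t)) /\
  forall r', meet_pred (proj1_sig s) (proj1_sig t) r' -> r' <= meet_index (proj1_sig s) (proj1_sig t).
Proof.
  eapply meet_index_spec; apply Rh_shape.
Qed.

Lemma schain_step {M : Semigroup} (l : list (MI M)) i d :
  schain l -> S i < length l -> leL (nth (S i) l d) (nth i l d).
Proof.
  revert i; induction l as [|x l IH]; intros i Hs Hi; [simpl in Hi; lia|].
  destruct l as [|y l]; [simpl in Hi; lia|].
  destruct i as [|i].
  - simpl. destruct Hs as [[H _] _]; exact H.
  - change (leL (nth (S i) (y :: l) d) (nth i (y :: l) d)).
    apply IH; [exact (proj2 Hs)| simpl in *; lia].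
Qed.

Lemma schain_mono {M : Semigroup} (l : list (MI M)) d i j :
  schain l -> i <= j -> j < length l -> leL (nth j l d) (nth i l d).
Proof.
  intros Hs; induction j as [|j IH]; intros Hij Hj.
  - assert (i = 0) by lia; subst; apply leL_refl.
  - destruct (Nat.eq_dec i (S j)) as [->|Hne]; [apply leL_refl|].
    eapply leL_trans; [apply schain_step; assumption| apply IH; lia].
Qed.

Lemma cons_pred {M : Semigroup} (x : MI M) L1 L2 k :
  meet_pred L1 L2 k -> exists k', meet_pred (cons_lm x L1) (cons_lm x L2) k' /\
    nth k' (cons_lm x L1) I_ = nth k L1 I_.
Proof.
  intros [H1 [H2 [H3 H4]]].
  destruct L1 as [|h1 t1]; [simpl in H1; lia|]. destruct L2 as [|h2 t2]; [simpl in H2; lia|].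
  assert (Eh : eqL h1 h2).
  { destruct k as [|k]; [exact H4|]. pose proof (H3 0 ltac:(lia)) as E0; simpl in E0; rewrite E0; apply eqL_refl. }
  cbn [cons_lm].
  rewrite (dec_iff (eqL x h2) (eqL x h1)) by (split; intro E; eapply eqL_trans; [exact E| apply eqL_sym; exact Eh| exact E| exact Eh]).
  destruct (dec (eqL x h1)).
  - exists k; split; [split; [exact H1| split; [exact H2| split; assumption]]| reflexivity].
  - exists (S k); split; [|reflexivity]. split; [simpl in *; lia|]. split; [simpl in *; lia|].
    split; [|exact H4]. intros [|j] Hj; [reflexivity|]. simpl. apply H3; lia.
Qed.

Lemma lm_pred {M : Semigroup} (l1 l2 : list (MI M)) R :
  meet_pred l1 l2 R -> exists R', meet_pred (lm l1) (lm l2) R' /\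
    leL (nth R' (lm l1) I_) (nth R l1 I_).
Proof.
  revert l2 R; induction l1 as [|x r1 IH]; intros l2 R [H1 [H2 [H3 H4]]]; [simpl in H1; lia|].
  destruct l2 as [|y r2]; [simpl in H2; lia|].
  destruct R as [|R].
  - destruct (lm_head x r1) as [a [ta [Ea Ha]]]. destruct (lm_head y r2) as [b [tb [Eb Hb]]].
    exists 0. rewrite Ea, Eb. split.
    + split; [simpl; lia|]. split; [simpl; lia|]. split; [intros; lia|]. simpl.
      eapply eqL_trans; [exact Ha| eapply eqL_trans; [exact H4| apply eqL_sym; exact Hb]].
    + simpl. apply Ha.
  - assert (Exy : x = y) by exact (H3 0 ltac:(lia)). subst y.
    destruct (IH r2 R) as [R0 [HP HL]].
    { split; [simpl in H1; lia|]. split; [simpl in H2; lia|].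
      split; [intros j Hj; exact (H3 (S j) ltac:(lia))| exact H4]. }
    rewrite !(lm_cons x). destruct (cons_pred x _ _ _ HP) as [k' [Hk Ek]].
    exists k'; split; [exact Hk|]. rewrite Ek. exact HL.
Qed.
Lemma f_leL {M : Semigroup} (f : MI M -> nat)
  (hf : forall m m' m'' : MI M, f m <= f (mulI (mulI m' m) m'')) x y :
  leL x y -> f y <= f x.
Proof. intros [c ->]. pose proof (hf y c I_) as H. rewrite mulI_I_r in H. exact H. Qed.

Lemma f_eqL {M : Semigroup} (f : MI M -> nat)
  (hf : forall m m' m'' : MI M, f m <= f (mulI (mulI m' m) m'')) x y :
  eqL x y -> f x = f y.
Proof. intros [H1 H2]. apply (f_leL f hf) in H1. apply (f_leL f hf) in H2. lia. Qed.

Lemma f_le_sup {X : Type} (f : X -> nat) x : lew (Fin (f x)) (supw f).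
Proof. destruct (lubw_spec (fun y => exists x, y = Fin (f x))) as [H _]. apply H. exists x; reflexivity. Qed.

Lemma Dfun_eq {M : Semigroup} (f : MI M -> nat) s : Dfun f s s = succw (supw f).
Proof. unfold Dfun. rewrite dec_true by reflexivity. reflexivity. Qed.

Lemma Dfun_ne {M : Semigroup} (f : MI M -> nat) s t : s <> t -> Dfun f s t = Fin (f (meetL s t)).
Proof. intro H. unfold Dfun. rewrite dec_false by exact H. reflexivity. Qed.

Lemma Fin_lt_top {X : Type} (f : X -> nat) x : lew (Fin (S (f x))) (succw (supw f)).
Proof. pose proof (f_le_sup f x) as H. destruct (supw f); simpl in *; auto; lia. Qed.

Lemma Dfun_top {M : Semigroup} (f : MI M -> nat) s t : lew (Dfun f s t) (succw (supw f)).
Proof.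
  destruct (classic (s = t)) as [<-|N].
  - rewrite Dfun_eq; apply lew_refl.
  - rewrite Dfun_ne by exact N. pose proof (Fin_lt_top f (meetL s t)) as H. destruct (supw f); simpl in *; auto; lia.
Qed.

Lemma meet_pred_sym {M : Semigroup} (s t : list (MI M)) r : meet_pred s t r -> meet_pred t s r.
Proof.
  intros [H1 [H2 [H3 H4]]]. split; [exact H2|]. split; [exact H1|].
  split; [intros j Hj; symmetry; apply H3, Hj| apply eqL_sym, H4].
Qed.

Lemma meetL_sym {M : Semigroup} (f : MI M -> nat)
  (hf : forall m m' m'' : MI M, f m <= f (mulI (mulI m' m) m'')) s t :
  f (meetL s t) = f (meetL t s).
Proof.
  unfold meetL. destruct (Rh_meet_spec s t) as [P1 M1]. destruct (Rh_meet_spec t s) as [P2 M2].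
  assert (E : meet_index (proj1_sig s) (proj1_sig t) = meet_index (proj1_sig t) (proj1_sig s)).
  { apply Nat.le_antisymm; [apply M2, meet_pred_sym, P1| apply M1, meet_pred_sym, P2]. }
  rewrite <- E. apply (f_eqL f hf). exact (proj2 (proj2 (proj2 P1))).
Qed.

Lemma nth_mid {M : Semigroup} (U' S : list (MI M)) p j :
  j < length S -> nth (length U' + j) (U' ++ map (fun x => mulI x p) S) I_ = mulI (nth j S I_) p.
Proof.
  intro Hj. rewrite app_nth2_plus. rewrite (nth_indep _ I_ (mulI I_ p)) by (rewrite length_map; exact Hj).
  exact (map_nth (fun x => mulI x p) S I_ j).
Qed.

Lemma meet_mul_core {M : Semigroup} (f : MI M -> nat)
  (hf : forall m m' m'' : MI M, f m <= f (mulI (mulI m' m) m'')) (s t u : Rh M) :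
  f (meetL s t) <= f (meetL (Rh_mul s u) (Rh_mul t u)).
Proof.
  destruct (Rh_meet_spec s t) as [Hr _].
  set (r := meet_index (proj1_sig s) (proj1_sig t)) in *.
  set (S := proj1_sig s) in *. set (T := proj1_sig t) in *.
  destruct (Rh_shape s) as [ES _]. destruct (Rh_shape t) as [ET _].
  destruct (Rh_shape u) as [EU _].
  assert (HU : proj1_sig u <> []) by (rewrite EU; discriminate).
  destruct (exists_last HU) as [U' [p EU']].
  set (P := fun x : MI M => mulI x p).
  assert (Hl : forall X : Rh M, proj1_sig (Rh_mul X u) = lm (U' ++ map P (proj1_sig X))).
  { intro X. destruct (Rh_shape X) as [EX _].
    cbn [Rh_mul proj1_sig]. unfold Rh_prod_list. rewrite EU'.
    rewrite last_app_ne by discriminate. simpl last.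
    rewrite EX at 2. simpl map. rewrite <- app_assoc. reflexivity. }
  assert (Hpred : meet_pred (U' ++ map P S) (U' ++ map P T) (length U' + r)).
  { destruct Hr as [H1 [H2 [H3 H4]]].
    split; [rewrite length_app, length_map; lia|].
    split; [rewrite length_app, length_map; lia|].
    split.
    - intros j Hj. destruct (le_lt_dec (length U') j) as [Hle|Hlt].
      + replace j with (length U' + (j - length U')) by lia.
        unfold P. rewrite !nth_mid by lia. f_equal. apply H3; lia.
      + rewrite !app_nth1 by exact Hlt. reflexivity.
    - unfold P. rewrite !nth_mid by lia. apply eqL_mulr, H4. }
  destruct (lm_pred _ _ _ Hpred) as [R' [HP' HL']].
  destruct (Rh_meet_spec (Rh_mul s u) (Rh_mul t u)) as [Hm Mm].
  assert (HP2 : meet_pred (proj1_sig (Rh_mul s u)) (proj1_sig (Rh_mul t u)) R')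
    by (rewrite !Hl; exact HP').
  assert (HL2 : leL (nth R' (proj1_sig (Rh_mul s u)) I_) (nth (length U' + r) (U' ++ map P S) I_))
    by (rewrite Hl; exact HL').
  clear HP' HL'. rename HP2 into HP', HL2 into HL'. apply Mm in HP'.
  unfold P in HL'. rewrite nth_mid in HL' by (destruct Hr; lia).
  unfold meetL. fold S r.
  eapply Nat.le_trans; [|apply (f_leL f hf); apply schain_mono; [exact (proj2 (proj2_sig (Rh_mul s u)))| exact HP'| apply Hm]].
  eapply Nat.le_trans; [|apply (f_leL f hf); exact HL'].
  exact (hf (nth r S I_) I_ p).
Qed.

Lemma meet_ultra {M : Semigroup} (f : MI M -> nat)
  (hf : forall m m' m'' : MI M, f m <= f (mulI (mulI m' m) m'')) (s t u : Rh M) :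
  Nat.min (f (meetL s t)) (f (meetL t u)) <= f (meetL s u).
Proof.
  destruct (Rh_meet_spec s t) as [[A1 [A2 [A3 A4]]] _].
  destruct (Rh_meet_spec t u) as [[B1 [B2 [B3 B4]]] _].
  destruct (Rh_meet_spec s u) as [C Cm].
  unfold meetL.
  set (r1 := meet_index (proj1_sig s) (proj1_sig t)) in *.
  set (r2 := meet_index (proj1_sig t) (proj1_sig u)) in *.
  set (r3 := meet_index (proj1_sig s) (proj1_sig u)) in *.
  set (S := proj1_sig s) in *. set (T := proj1_sig t) in *. set (U := proj1_sig u) in *.
  assert (Hr : meet_pred S U (Nat.min r1 r2)).
  { split; [lia|]. split; [lia|]. split.
    - intros j Hj. rewrite A3 by lia. apply B3; lia.
    - destruct (lt_eq_lt_dec r1 r2) as [[Hlt|Heq]|Hgt].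
      + rewrite Nat.min_l by lia. rewrite (B3 r1 Hlt) in A4. exact A4.
      + replace (Nat.min r1 r2) with r1 by lia. rewrite <- Heq in B4. eapply eqL_trans; [exact A4| exact B4].
      + rewrite Nat.min_r by lia. rewrite (A3 r2 Hgt). exact B4. }
  apply Cm in Hr.
  eapply Nat.le_trans; [|apply (f_leL f hf); apply schain_mono; [exact (proj2 (proj2_sig s))| exact Hr| apply C]].
  destruct (le_lt_dec r1 r2) as [Hle|Hlt].
  - rewrite (Nat.min_l r1 r2 Hle). apply Nat.le_min_l.
  - rewrite (Nat.min_r r1 r2) by lia. rewrite (A3 r2 Hlt). apply Nat.le_min_r.
Qed.

Lemma minw_le_l x y : lew (minw x y) x.
Proof. destruct x, y; simpl; auto; lia. Qed.

Lemma minw_le_r x y : lew (minw x y) y.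
Proof. destruct x, y; simpl; auto; lia. Qed.

Lemma part_i {M : Semigroup} (f : MI M -> nat)
  (hf : forall m m' m'' : MI M, f m <= f (mulI (mulI m' m) m'')) :
  is_strict_length_function (@Rh_mul M) (Dfun f).
Proof.
  split; [split; [|split; [|split]]|].
  - intros m m'. destruct (classic (m = m')) as [<-|N]; [reflexivity|].
    rewrite !Dfun_ne by (auto). f_equal. apply meetL_sym, hf.
  - intros m m' m''. rewrite Dfun_eq. apply Dfun_top.
  - intros m m' m''. destruct (classic (Rh_mul m' m = Rh_mul m'' m)) as [E|N].
    + rewrite E, Dfun_eq. apply Dfun_top.
    + assert (N' : m' <> m'') by (intro E; apply N; rewrite E; reflexivity).
      rewrite !Dfun_ne by assumption. simpl. apply meet_mul_core, hf.
  - intros m m' m''.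
    destruct (classic (m = m'')) as [<-|N].
    + rewrite Dfun_eq. eapply lew_trans; [apply minw_le_l| apply Dfun_top].
    + destruct (classic (m = m')) as [<-|N1].
      * rewrite Dfun_eq. apply minw_le_r.
      * destruct (classic (m' = m'')) as [<-|N2].
        -- rewrite Dfun_eq. apply minw_le_l.
        -- rewrite !Dfun_ne by assumption. simpl. apply meet_ultra, hf.
  - intros m m' m'' H. apply NNPP; intro N.
    rewrite Dfun_ne in H by exact N. rewrite Dfun_eq in H.
    pose proof (f_le_sup f (meetL m' m'')) as T.
    destruct (supw f); simpl in *; [injection H; lia| discriminate].
Qed.
Definition lenw {M : Semigroup} (f : MI M -> nat) : natw := succw (supw f).
Definition Eq_ {M : Semigroup} (f : MI M -> nat) (i : nat) (s t : Rh M) : Prop :=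
  lew (Fin i) (Dfun f s t).
Definition canon {M : Semigroup} (f : MI M -> nat) (i : nat) (s : Rh M) : Rh M :=
  epsilon (inhabits (Rh_one M)) (fun t => Eq_ f i s t).

Lemma lew_minw i x y : lew (Fin i) x -> lew (Fin i) y -> lew (Fin i) (minw x y).
Proof. destruct x, y; simpl; auto; lia. Qed.

Lemma E_refl {M : Semigroup} (f : MI M -> nat) i s : lew (Fin i) (lenw f) -> Eq_ f i s s.
Proof. unfold Eq_. rewrite Dfun_eq. auto. Qed.

Lemma E_sym {M : Semigroup} (f : MI M -> nat)
  (hf : forall m m' m'' : MI M, f m <= f (mulI (mulI m' m) m'')) i s t :
  Eq_ f i s t -> Eq_ f i t s.
Proof. unfold Eq_. destruct (part_i f hf) as [[L1 _] _]. rewrite L1. auto. Qed.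

Lemma E_trans {M : Semigroup} (f : MI M -> nat)
  (hf : forall m m' m'' : MI M, f m <= f (mulI (mulI m' m) m'')) i s t u :
  Eq_ f i s t -> Eq_ f i t u -> Eq_ f i s u.
Proof.
  unfold Eq_. destruct (part_i f hf) as [[_ [_ [_ L4]]] _]. intros H1 H2.
  eapply lew_trans; [apply lew_minw; [exact H1| exact H2]| apply L4].
Qed.

Lemma E_mul {M : Semigroup} (f : MI M -> nat)
  (hf : forall m m' m'' : MI M, f m <= f (mulI (mulI m' m) m'')) i s t u :
  Eq_ f i s t -> Eq_ f i (Rh_mul s u) (Rh_mul t u).
Proof.
  unfold Eq_. destruct (part_i f hf) as [[_ [_ [L3 _]]] _]. intro H.
  eapply lew_trans; [exact H| apply L3].
Qed.

Lemma E_le {M : Semigroup} (f : MI M -> nat) i j s t : j <= i -> Eq_ f i s t -> Eq_ f j s t.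
Proof. unfold Eq_. apply lew_Fin_le. Qed.

Lemma E_0 {M : Semigroup} (f : MI M -> nat) s t : Eq_ f 0 s t.
Proof. apply lew_0. Qed.

Lemma canon_spec {M : Semigroup} (f : MI M -> nat) i s :
  lew (Fin i) (lenw f) -> Eq_ f i s (canon f i s).
Proof.
  intro H. unfold canon. apply (epsilon_spec (inhabits (Rh_one M)) (fun t => Eq_ f i s t)).
  exists s. apply E_refl, H.
Qed.

Lemma canon_eq {M : Semigroup} (f : MI M -> nat)
  (hf : forall m m' m'' : MI M, f m <= f (mulI (mulI m' m) m'')) i s t :
  Eq_ f i s t -> canon f i s = canon f i t.
Proof.
  intro H. unfold canon. f_equal. apply functional_extensionality. intro x.
  apply propositional_extensionality. split; intro H'.
  - eapply E_trans; [exact hf| apply (E_sym f hf); exact H| exact H'].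
  - eapply E_trans; [exact hf| exact H| exact H'].
Qed.

Lemma canon_iff {M : Semigroup} (f : MI M -> nat)
  (hf : forall m m' m'' : MI M, f m <= f (mulI (mulI m' m) m'')) i s t :
  lew (Fin i) (lenw f) -> (canon f i s = canon f i t <-> Eq_ f i s t).
Proof.
  intro Hi. split; [|apply canon_eq, hf].
  intro E. pose proof (canon_spec f i s Hi) as A. pose proof (canon_spec f i t Hi) as B.
  rewrite <- E in B. eapply E_trans; [exact hf| exact A| apply (E_sym f hf); exact B].
Qed.

Lemma canon_idem {M : Semigroup} (f : MI M -> nat)
  (hf : forall m m' m'' : MI M, f m <= f (mulI (mulI m' m) m'')) i s :
  lew (Fin i) (lenw f) -> canon f i (canon f i s) = canon f i s.
Proof.
  intro Hi. apply canon_eq; [exact hf|]. apply (E_sym f hf). apply canon_spec, Hi.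
Qed.

Definition Vt {M : Semigroup} (f : MI M -> nat) : Type :=
  { p : nat * Rh M | lew (Fin (fst p)) (lenw f) /\ snd p = canon f (fst p) (snd p) }.

Definition vi {M : Semigroup} {f : MI M -> nat} (v : Vt f) : nat := fst (proj1_sig v).
Definition vs {M : Semigroup} {f : MI M -> nat} (v : Vt f) : Rh M := snd (proj1_sig v).
Definition vH {M : Semigroup} {f : MI M -> nat} (v : Vt f) : lew (Fin (vi v)) (lenw f) :=
  proj1 (proj2_sig v).
Lemma vC {M : Semigroup} {f : MI M -> nat} (v : Vt f) : vs v = canon f (vi v) (vs v).
Proof. exact (proj2 (proj2_sig v)). Qed.

Definition mkv {M : Semigroup} (f : MI M -> nat)
  (hf : forall m m' m'' : MI M, f m <= f (mulI (mulI m' m) m'')) i (s : Rh M)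
  (H : lew (Fin i) (lenw f)) : Vt f :=
  exist _ (i, canon f i s) (conj H (eq_sym (canon_idem f hf i s H))).

Lemma Vt_eq {M : Semigroup} {f : MI M -> nat} (v w : Vt f) : vi v = vi w -> vs v = vs w -> v = w.
Proof.
  destruct v as [[i s] Hv], w as [[j t] Hw]. unfold vi, vs; simpl. intros -> ->.
  f_equal. apply proof_irrelevance.
Qed.

Lemma mkv_ext {M : Semigroup} (f : MI M -> nat)
  (hf : forall m m' m'' : MI M, f m <= f (mulI (mulI m' m) m'')) i j s t H H' :
  i = j -> Eq_ f i s t -> mkv f hf i s H = mkv f hf j t H'.
Proof.
  intros <- E. apply Vt_eq; [reflexivity|]. unfold vs; simpl. apply canon_eq; assumption.
Qed.

Lemma mkv_inv {M : Semigroup} (f : MI M -> nat)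
  (hf : forall m m' m'' : MI M, f m <= f (mulI (mulI m' m) m'')) i s t H H' :
  mkv f hf i s H = mkv f hf i t H' -> Eq_ f i s t.
Proof.
  intro E. apply (f_equal vs) in E. unfold vs in E; simpl in E.
  apply (canon_iff f hf i s t H) in E. exact E.
Qed.

Lemma mkv_self {M : Semigroup} (f : MI M -> nat)
  (hf : forall m m' m'' : MI M, f m <= f (mulI (mulI m' m) m'')) (v : Vt f) :
  mkv f hf (vi v) (vs v) (vH v) = v.
Proof.
  apply Vt_eq; [reflexivity|]. unfold vs at 1; simpl. symmetry; apply vC.
Qed.

Definition rootv {M : Semigroup} (f : MI M -> nat)
  (hf : forall m m' m'' : MI M, f m <= f (mulI (mulI m' m) m'')) : Vt f :=
  mkv f hf 0 (Rh_one M) (lew_0 _).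

Definition parv {M : Semigroup} (f : MI M -> nat)
  (hf : forall m m' m'' : MI M, f m <= f (mulI (mulI m' m) m'')) (v : Vt f) : Vt f :=
  mkv f hf (pred (vi v)) (vs v) (lew_Fin_le _ _ _ (Nat.le_pred_l _) (vH v)).

Lemma vi_mkv {M : Semigroup} (f : MI M -> nat)
  (hf : forall m m' m'' : MI M, f m <= f (mulI (mulI m' m) m'')) i s H :
  vi (mkv f hf i s H) = i.
Proof. reflexivity. Qed.

Lemma vi0_root {M : Semigroup} (f : MI M -> nat)
  (hf : forall m m' m'' : MI M, f m <= f (mulI (mulI m' m) m'')) (v : Vt f) :
  vi v = 0 -> v = rootv f hf.
Proof.
  intro H0. rewrite <- (mkv_self f hf v). unfold rootv. apply mkv_ext; [exact H0|].
  rewrite H0. apply E_0.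
Qed.

Lemma parv_root {M : Semigroup} (f : MI M -> nat)
  (hf : forall m m' m'' : MI M, f m <= f (mulI (mulI m' m) m'')) :
  parv f hf (rootv f hf) = rootv f hf.
Proof. apply vi0_root. reflexivity. Qed.

Lemma depth_rootv {M : Semigroup} (f : MI M -> nat)
  (hf : forall m m' m'' : MI M, f m <= f (mulI (mulI m' m) m'')) :
  vi (rootv f hf) = 0.
Proof. reflexivity. Qed.

Lemma depth_parv {M : Semigroup} (f : MI M -> nat)
  (hf : forall m m' m'' : MI M, f m <= f (mulI (mulI m' m) m'')) (v : Vt f) :
  v <> rootv f hf -> vi v = S (vi (parv f hf v)).
Proof.
  intro N. unfold parv. rewrite vi_mkv. destruct (vi v) eqn:E; [|reflexivity].
  exfalso; apply N, vi0_root, E.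
Qed.

Definition Tr {M : Semigroup} (f : MI M -> nat)
  (hf : forall m m' m'' : MI M, f m <= f (mulI (mulI m' m) m'')) : rtree :=
  {| vert := Vt f; root := rootv f hf; par := parv f hf; depth := vi;
     par_root := parv_root f hf; depth_root := depth_rootv f hf; depth_par := depth_parv f hf |}.

Definition actv {M : Semigroup} (f : MI M -> nat)
  (hf : forall m m' m'' : MI M, f m <= f (mulI (mulI m' m) m'')) (v : Vt f) (u : Rh M) : Vt f :=
  mkv f hf (vi v) (Rh_mul (vs v) u) (vH v).

Definition fromv {M : Semigroup} (f : MI M -> nat)
  (hf : forall m m' m'' : MI M, f m <= f (mulI (mulI m' m) m'')) (s : Rh M) (i : nat) : Vt f :=
  match excluded_middle_informative (lew (Fin i) (lenw f)) with
  | left H => mkv f hf i s H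
  | right _ => rootv f hf
  end.

Lemma fromv_eq {M : Semigroup} (f : MI M -> nat)
  (hf : forall m m' m'' : MI M, f m <= f (mulI (mulI m' m) m'')) s i H :
  fromv f hf s i = mkv f hf i s H.
Proof.
  unfold fromv. destruct (excluded_middle_informative _) as [H'|N]; [|contradiction].
  apply mkv_ext; [reflexivity| apply E_refl, H].
Qed.

Definition rayv {M : Semigroup} (f : MI M -> nat)
  (hf : forall m m' m'' : MI M, f m <= f (mulI (mulI m' m) m'')) : nat -> Vt f :=
  fromv f hf (Rh_one M).

Lemma depth0_root (T : rtree) v : depth T v = 0 -> v = root T.
Proof. intro H. apply NNPP; intro N. rewrite (depth_par T N) in H. discriminate. Qed.

Lemma ray_depth (T : rtree) len a i : is_ray T len a -> lew (Fin i) len -> depth T (a i) = i.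
Proof.
  intros [H0 HS]. induction i as [|i IH]; intro Hi.
  - rewrite H0. apply depth_root.
  - destruct (HS i Hi) as [Hp Hn]. rewrite (depth_par T Hn), Hp, IH; [reflexivity|].
    eapply lew_Fin_le; [|exact Hi]. lia.
Qed.

Lemma fromv_ray {M : Semigroup} (f : MI M -> nat)
  (hf : forall m m' m'' : MI M, f m <= f (mulI (mulI m' m) m'')) s i :
  lew (Fin (S i)) (lenw f) ->
  parv f hf (fromv f hf s (S i)) = fromv f hf s i /\ fromv f hf s (S i) <> rootv f hf.
Proof.
  intro H. assert (H' : lew (Fin i) (lenw f)) by (eapply lew_Fin_le; [|exact H]; lia).
  rewrite (fromv_eq f hf s (S i) H), (fromv_eq f hf s i H'). split.
  - unfold parv. apply mkv_ext; [reflexivity|]. simpl. apply (E_sym f hf).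
    apply (E_le f (S i)); [lia| apply canon_spec, H].
  - intro E. apply (f_equal vi) in E. discriminate.
Qed.

Lemma vt_bound {M : Semigroup} (f : MI M -> nat) (v : Vt f) j :
  lenw f = Fin j -> vi v <= j.
Proof. intro E. pose proof (vH v) as H. rewrite E in H. exact H. Qed.

Lemma Tr_maxray_len {M : Semigroup} (f : MI M -> nat)
  (hf : forall m m' m'' : MI M, f m <= f (mulI (mulI m' m) m'')) l a :
  is_maxray (Tr f hf) l a -> l = lenw f.
Proof.
  intros [Hray Hmax].
  destruct l as [l0|].
  - destruct (classic (lew (Fin (S l0)) (lenw f))) as [Hs|Hns].
    + exfalso.
      set (v := a l0).
      set (a' := fun i => if i <=? l0 then a i else fromv f hf (vs v) i).
      assert (Hr : is_ray (Tr f hf) (lenw f) a').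
      { split.
        - unfold a'. simpl. apply Hray.
        - intros i Hi. unfold a'.
          destruct (le_lt_dec (S i) l0) as [Hle|Hlt].
          + rewrite (proj2 (Nat.leb_le _ _) Hle), (proj2 (Nat.leb_le i l0)) by lia.
            apply Hray. simpl. exact Hle.
          + rewrite (proj2 (Nat.leb_gt (S i) l0) Hlt).
            destruct (Nat.eq_dec i l0) as [->|Hne].
            * rewrite (proj2 (Nat.leb_le l0 l0)) by lia.
              destruct (fromv_ray f hf (vs v) l0 Hi) as [Hp Hn]. split; [|exact Hn].
              simpl. rewrite Hp.
              assert (Hd : vi (a l0) = l0).
              { apply (ray_depth (Tr f hf) (Fin l0) a l0 Hray). simpl; lia. }
              assert (H' : lew (Fin l0) (lenw f)) by (eapply lew_Fin_le; [|exact Hi]; lia).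
              rewrite (fromv_eq f hf (vs v) l0 H').
              transitivity (mkv f hf (vi (a l0)) (vs (a l0)) (vH (a l0))); [|apply mkv_self].
              apply mkv_ext; [symmetry; exact Hd| apply E_refl, H'].
            * rewrite (proj2 (Nat.leb_gt i l0)) by lia. apply fromv_ray, Hi. }
      assert (Hag : forall i, lew (Fin i) (Fin l0) -> a' i = a i).
      { intros i Hi. unfold a'. simpl in Hi. rewrite (proj2 (Nat.leb_le _ _) Hi). reflexivity. }
      pose proof (Hmax _ _ Hr Hag) as Hle.
      pose proof (lew_trans _ _ _ Hs Hle) as C. simpl in C. lia.
    + destruct (lenw f) as [L|] eqn:EL; [|exfalso; apply Hns; exact I].
      simpl in Hns. f_equal.
      assert (Hd : vi (a l0) = l0) by (apply (ray_depth (Tr f hf) (Fin l0) a l0 Hray); simpl; lia).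
      pose proof (vt_bound f (a l0) L EL). lia.
  - destruct (lenw f) as [L|] eqn:EL; [|reflexivity]. exfalso.
    pose proof (ray_depth (Tr f hf) Omega a (S L) Hray I) as Hd. simpl in Hd.
    pose proof (vt_bound f (a (S L)) L EL). lia.
Qed.
Lemma Tr_uniform {M : Semigroup} (f : MI M -> nat)
  (hf : forall m m' m'' : MI M, f m <= f (mulI (mulI m' m) m'')) : uniform (Tr f hf).
Proof.
  intros l1 a1 l2 a2 H1 H2. rewrite (Tr_maxray_len f hf _ _ H1), (Tr_maxray_len f hf _ _ H2). reflexivity.
Qed.

Lemma not_lew x y : ~ lew y x -> exists L, x = Fin L /\ lew (Fin (S L)) y.
Proof.
  destruct x as [L|], y as [n|]; simpl; intro H; try tauto.
  - exists L; split; [reflexivity|]. lia.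
  - exists L; split; [reflexivity| exact I].
Qed.

Lemma Tr_ray_max {M : Semigroup} (f : MI M -> nat)
  (hf : forall m m' m'' : MI M, f m <= f (mulI (mulI m' m) m'')) :
  is_maxray (Tr f hf) (lenw f) (rayv f hf).
Proof.
  split.
  - split.
    + unfold rayv. simpl. rewrite (fromv_eq f hf (Rh_one M) 0 (lew_0 _)). reflexivity.
    + intros i Hi. exact (fromv_ray f hf (Rh_one M) i Hi).
  - intros len' a' Hr _. apply NNPP; intro N.
    destruct (not_lew _ _ N) as [L [EL HL]].
    pose proof (ray_depth (Tr f hf) len' a' (S L) Hr HL) as Hd. simpl in Hd.
    pose proof (vt_bound f (a' (S L)) L EL). lia.
Qed.

Lemma actv_one {M : Semigroup} (f : MI M -> nat)
  (hf : forall m m' m'' : MI M, f m <= f (mulI (mulI m' m) m'')) (v : Vt f) :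
  actv f hf v (Rh_one M) = v.
Proof. unfold actv. rewrite Rh_mul_one_r. apply mkv_self. Qed.

Lemma vs_mkv {M : Semigroup} (f : MI M -> nat)
  (hf : forall m m' m'' : MI M, f m <= f (mulI (mulI m' m) m'')) i s H :
  vs (mkv f hf i s H) = canon f i s.
Proof. reflexivity. Qed.

Lemma actv_mul {M : Semigroup} (f : MI M -> nat)
  (hf : forall m m' m'' : MI M, f m <= f (mulI (mulI m' m) m'')) (v : Vt f) s t :
  actv f hf v (Rh_mul s t) = actv f hf (actv f hf v s) t.
Proof.
  unfold actv at 1 3. apply mkv_ext; [reflexivity|]. unfold actv. rewrite vs_mkv.
  rewrite <- Rh_mul_assoc. apply (E_mul f hf). apply canon_spec, vH.
Qed.

Lemma actv_depth {M : Semigroup} (f : MI M -> nat)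
  (hf : forall m m' m'' : MI M, f m <= f (mulI (mulI m' m) m'')) s :
  depth_pres (Tr f hf) (Tr f hf) (fun v => actv f hf v s).
Proof. intro v. reflexivity. Qed.

Lemma par_actv {M : Semigroup} (f : MI M -> nat)
  (hf : forall m m' m'' : MI M, f m <= f (mulI (mulI m' m) m'')) (v : Vt f) s :
  parv f hf (actv f hf v s) = actv f hf (parv f hf v) s.
Proof.
  unfold parv at 1. unfold actv at 2. apply mkv_ext; [reflexivity|].
  unfold actv, parv. rewrite !vs_mkv, !vi_mkv.
  eapply (E_trans f hf).
  - apply (E_sym f hf). apply (E_le f (vi v)); [lia|]. apply canon_spec, vH.
  - apply (E_mul f hf). apply canon_spec. apply (lew_Fin_le _ _ _ (Nat.le_pred_l _) (vH v)).
Qed.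

Lemma iter_actv {M : Semigroup} (f : MI M -> nat)
  (hf : forall m m' m'' : MI M, f m <= f (mulI (mulI m' m) m'')) (v : Vt f) s a :
  Nat.iter a (par (Tr f hf)) (actv f hf v s) = actv f hf (Nat.iter a (par (Tr f hf)) v) s.
Proof.
  induction a as [|a IH]; [reflexivity|].
  change (par (Tr f hf) (Nat.iter a (par (Tr f hf)) (actv f hf v s)) =
          actv f hf (par (Tr f hf) (Nat.iter a (par (Tr f hf)) v)) s).
  rewrite IH. apply par_actv.
Qed.

Lemma actv_dist {M : Semigroup} (f : MI M -> nat)
  (hf : forall m m' m'' : MI M, f m <= f (mulI (mulI m' m) m'')) s :
  dist_noninc (Tr f hf) (Tr f hf) (fun v => actv f hf v s).
Proof.
  intros u v n [a [b [Hab E]]]. exists a, b; split; [exact Hab|].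
  cbv beta. rewrite !iter_actv, E. reflexivity.
Qed.

Lemma actv_ray {M : Semigroup} (f : MI M -> nat)
  (hf : forall m m' m'' : MI M, f m <= f (mulI (mulI m' m) m'')) i s H :
  actv f hf (rayv f hf i) s = mkv f hf i s H.
Proof.
  unfold rayv. rewrite (fromv_eq f hf (Rh_one M) i H). unfold actv. apply mkv_ext; [reflexivity|].
  rewrite vs_mkv, vi_mkv. rewrite <- (Rh_mul_one_l s) at 2. apply (E_mul f hf).
  apply (E_sym f hf). apply canon_spec, H.
Qed.

Lemma vert_cover {M : Semigroup} (f : MI M -> nat)
  (hf : forall m m' m'' : MI M, f m <= f (mulI (mulI m' m) m'')) (v : Vt f) :
  exists i s, lew (Fin i) (lenw f) /\ v = actv f hf (rayv f hf i) s.
Proof.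
  exists (vi v), (vs v). split; [exact (vH v)|].
  rewrite (actv_ray f hf (vi v) (vs v) (vH v)). symmetry; apply mkv_self.
Qed.

Definition chi0 {M : Semigroup} (f : MI M -> nat)
  (hf : forall m m' m'' : MI M, f m <= f (mulI (mulI m' m) m'')) : etree (@Rh_mul M) (@Rh_one M) :=
  Build_etree (@Rh_mul M) (Rh_one M) (Tr_uniform f hf) (Tr_ray_max f hf) (actv f hf)
    (actv_one f hf) (actv_mul f hf) (actv_depth f hf) (actv_dist f hf) (vert_cover f hf).

Lemma chi0_sf {M : Semigroup} (f : MI M -> nat)
  (hf : forall m m' m'' : MI M, f m <= f (mulI (mulI m' m) m'')) : strongly_faithful (chi0 f hf).
Proof.
  intros s s' Hall. apply NNPP; intro N.
  pose proof (Fin_lt_top f (meetL s s')) as H.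
  specialize (Hall (S (f (meetL s s'))) H).
  change (actv f hf (rayv f hf (S (f (meetL s s')))) s = actv f hf (rayv f hf (S (f (meetL s s')))) s') in Hall.
  rewrite !(actv_ray f hf _ _ H) in Hall. apply mkv_inv in Hall.
  unfold Eq_ in Hall. rewrite Dfun_ne in Hall by exact N. simpl in Hall. lia.
Qed.

Lemma chi0_D {M : Semigroup} (f : MI M -> nat)
  (hf : forall m m' m'' : MI M, f m <= f (mulI (mulI m' m) m'')) s t :
  Dfun f s t = Dchi (chi0 f hf) s t.
Proof.
  unfold Dchi. symmetry. apply lub_down. intro y. split.
  - intros [i [-> [Hi Hall]]]. exists i; split; [reflexivity|].
    specialize (Hall i (le_n i)).
    change (actv f hf (rayv f hf i) s = actv f hf (rayv f hf i) t) in Hall.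
    rewrite !(actv_ray f hf _ _ Hi) in Hall. exact (mkv_inv f hf _ _ _ _ _ Hall).
  - intros [i [-> Hi]]. exists i; split; [reflexivity|].
    assert (Hl : lew (Fin i) (lenw f)) by (eapply lew_trans; [exact Hi| apply Dfun_top]).
    split; [exact Hl|]. intros j Hj.
    assert (Hl' : lew (Fin j) (lenw f)) by (eapply lew_Fin_le; [exact Hj| exact Hl]).
    change (actv f hf (rayv f hf j) s = actv f hf (rayv f hf j) t).
    rewrite !(actv_ray f hf _ _ Hl'). apply mkv_ext; [reflexivity|].
    eapply E_le; [exact Hj| exact Hi].
Qed.
Lemma par_of_dist1 (T : rtree) u w k :
  depth T u = S k -> depth T w = k -> dist_le T u w 1 -> par T u = w.
Proof.
  intros Hu Hw [a [b [Hab E]]].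
  destruct a as [|[|a]], b as [|[|b]]; try lia.
  - simpl in E. subst. lia.
  - simpl in E. exfalso. subst u.
    destruct (classic (w = root T)) as [->|N].
    + rewrite par_root, depth_root in Hu. discriminate.
    + rewrite (depth_par T N) in Hw. lia.
  - exact E.
Qed.

Lemma et_len_eq {M : Semigroup} (f : MI M -> nat) (chi' : etree (@Rh_mul M) (@Rh_one M))
  (HD : forall s t, Dfun f s t = Dchi chi' s t) : et_len chi' = lenw f.
Proof.
  pose proof (HD (Rh_one M) (Rh_one M)) as H. rewrite Dfun_eq in H. unfold lenw. rewrite H.
  unfold Dchi. symmetry. apply lub_down. intro y; split.
  - intros [i [-> [Hi _]]]. exists i; split; [reflexivity| exact Hi].
  - intros [i [-> Hi]]. exists i; split; [reflexivity|]. split; [exact Hi|]. intros; reflexivity.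
Qed.

Lemma chi_root {M : Semigroup} (chi' : etree (@Rh_mul M) (@Rh_one M)) s :
  et_act chi' (et_ray chi' 0) s = root (et_T chi').
Proof.
  apply depth0_root. rewrite (et_act_depth chi' s (et_ray chi' 0)).
  apply (ray_depth _ _ _ 0 (proj1 (et_ray_max chi'))). apply lew_0.
Qed.

Lemma chi_depth {M : Semigroup} (chi' : etree (@Rh_mul M) (@Rh_one M)) i s :
  lew (Fin i) (et_len chi') -> depth (et_T chi') (et_act chi' (et_ray chi' i) s) = i.
Proof.
  intro Hi. rewrite (et_act_depth chi' s (et_ray chi' i)).
  apply (ray_depth _ _ _ i (proj1 (et_ray_max chi')) Hi).
Qed.

Lemma chi_par {M : Semigroup} (chi' : etree (@Rh_mul M) (@Rh_one M)) i s :
  lew (Fin (S i)) (et_len chi') ->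
  par (et_T chi') (et_act chi' (et_ray chi' (S i)) s) = et_act chi' (et_ray chi' i) s.
Proof.
  intro Hi. assert (Hi' : lew (Fin i) (et_len chi')) by (eapply lew_Fin_le; [|exact Hi]; lia).
  apply (par_of_dist1 _ _ _ i); [apply chi_depth, Hi| apply chi_depth, Hi'|].
  apply (et_act_dist chi' s).
  exists 1, 0. split; [lia|]. simpl. apply (proj2 (proj1 (et_ray_max chi')) i Hi).
Qed.

Lemma chi_prefix {M : Semigroup} (chi' : etree (@Rh_mul M) (@Rh_one M)) s t i :
  lew (Fin i) (et_len chi') ->
  et_act chi' (et_ray chi' i) s = et_act chi' (et_ray chi' i) t ->
  forall j, j <= i -> et_act chi' (et_ray chi' j) s = et_act chi' (et_ray chi' j) t.
Proof.
  induction i as [|i IH]; intros Hi E j Hj.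
  - assert (j = 0) by lia; subst; exact E.
  - destruct (Nat.eq_dec j (S i)) as [->|Hne]; [exact E|].
    apply IH; [eapply lew_Fin_le; [|exact Hi]; lia| |lia].
    rewrite <- !(chi_par chi' i) by exact Hi. rewrite E. reflexivity.
Qed.

Lemma chi_E {M : Semigroup} (f : MI M -> nat) (chi' : etree (@Rh_mul M) (@Rh_one M))
  (HD : forall s t, Dfun f s t = Dchi chi' s t) i s t :
  lew (Fin i) (et_len chi') ->
  (Eq_ f i s t <-> et_act chi' (et_ray chi' i) s = et_act chi' (et_ray chi' i) t).
Proof.
  intro Hi. unfold Eq_. rewrite HD. unfold Dchi.
  rewrite (lub_dc _ (fun i => lew (Fin i) (et_len chi') /\ forall j, j <= i ->
                      et_act chi' (et_ray chi' j) s = et_act chi' (et_ray chi' j) t)).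
  - split; [intros [_ H]; apply H; lia| intro H; split; [exact Hi| apply chi_prefix; assumption]].
  - intro y. split; intros [j [-> H]]; exists j; split; auto; tauto.
  - split; [apply lew_0|]. intros j Hj. assert (j = 0) by lia; subst. rewrite !chi_root. reflexivity.
  - intros j k Hkj [H1 H2]. split; [eapply lew_Fin_le; eassumption|]. intros l Hl; apply H2; lia.
Qed.

Definition phiv {M : Semigroup} (f : MI M -> nat) (chi' : etree (@Rh_mul M) (@Rh_one M))
  (v : Vt f) : vert (et_T chi') := et_act chi' (et_ray chi' (vi v)) (vs v).

Lemma phiv_mkv {M : Semigroup} (f : MI M -> nat)
  (hf : forall m m' m'' : MI M, f m <= f (mulI (mulI m' m) m''))
  (chi' : etree (@Rh_mul M) (@Rh_one M))
  (HD : forall s t, Dfun f s t = Dchi chi' s t) i s H :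
  phiv f chi' (mkv f hf i s H) = et_act chi' (et_ray chi' i) s.
Proof.
  unfold phiv. rewrite vi_mkv, vs_mkv.
  assert (H' : lew (Fin i) (et_len chi')) by (rewrite (et_len_eq f chi' HD); exact H).
  apply (chi_E f chi' HD i _ _ H'). apply (E_sym f hf). apply canon_spec, H.
Qed.

Lemma phiv_par {M : Semigroup} (f : MI M -> nat)
  (hf : forall m m' m'' : MI M, f m <= f (mulI (mulI m' m) m''))
  (chi' : etree (@Rh_mul M) (@Rh_one M))
  (HD : forall s t, Dfun f s t = Dchi chi' s t) (v : Vt f) :
  phiv f chi' (parv f hf v) = par (et_T chi') (phiv f chi' v).
Proof.
  unfold parv. rewrite (phiv_mkv f hf chi' HD).
  destruct (vi v) as [|k] eqn:Ev.
  - simpl. unfold phiv. rewrite Ev, chi_root, par_root. reflexivity.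
  - simpl. unfold phiv. rewrite Ev. symmetry. apply chi_par.
    rewrite (et_len_eq f chi' HD), <- Ev. apply vH.
Qed.

Lemma iter_phiv {M : Semigroup} (f : MI M -> nat)
  (hf : forall m m' m'' : MI M, f m <= f (mulI (mulI m' m) m''))
  (chi' : etree (@Rh_mul M) (@Rh_one M))
  (HD : forall s t, Dfun f s t = Dchi chi' s t) (v : Vt f) a :
  Nat.iter a (par (et_T chi')) (phiv f chi' v) = phiv f chi' (Nat.iter a (par (Tr f hf)) v).
Proof.
  induction a as [|a IH]; [reflexivity|].
  change (par (et_T chi') (Nat.iter a (par (et_T chi')) (phiv f chi' v)) =
          phiv f chi' (parv f hf (Nat.iter a (par (Tr f hf)) v))).
  rewrite IH, (phiv_par f hf chi' HD). reflexivity.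
Qed.

Lemma uniqueness {M : Semigroup} (f : MI M -> nat)
  (hf : forall m m' m'' : MI M, f m <= f (mulI (mulI m' m) m''))
  (chi' : etree (@Rh_mul M) (@Rh_one M))
  (HD : forall s t, Dfun f s t = Dchi chi' s t) : etree_iso (chi0 f hf) chi'.
Proof.
  pose proof (et_len_eq f chi' HD) as HL.
  exists (phiv f chi'). split; [|split; [|split; [|split; [|split]]]].
  - intros x y E. change (Vt f) in x, y.
    assert (Hd : vi x = vi y).
    { pose proof (f_equal (depth (et_T chi')) E) as E'. unfold phiv in E'.
      rewrite !chi_depth in E' by (rewrite HL; apply vH). exact E'. }
    apply Vt_eq; [exact Hd|].
    unfold phiv in E. rewrite <- Hd in E.
    apply (chi_E f chi' HD) in E; [|rewrite HL; apply vH].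
    rewrite (vC x), (vC y), <- Hd. apply canon_eq; [exact hf| exact E].
  - intro y. destruct (et_vert chi' y) as [i [s [Hi ->]]].
    rewrite HL in Hi. exists (mkv f hf i s Hi). apply (phiv_mkv f hf chi' HD).
  - intro v. change (Vt f) in v. unfold phiv. apply chi_depth. rewrite HL; apply vH.
  - intros u v n [a [b [Hab E]]]. exists a, b; split; [exact Hab|].
    change (Vt f) in u, v.
    rewrite !(iter_phiv f hf chi' HD). f_equal. exact E.
  - intros i Hi. change (lew (Fin i) (lenw f)) in Hi.
    change (phiv f chi' (fromv f hf (Rh_one M) i) = et_ray chi' i).
    rewrite (fromv_eq f hf (Rh_one M) i Hi), (phiv_mkv f hf chi' HD).
    apply et_act_one.
  - intros v s. change (Vt f) in v.
    change (phiv f chi' (actv f hf v s) = et_act chi' (phiv f chi' v) s).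
    unfold actv. rewrite (phiv_mkv f hf chi' HD). unfold phiv. apply et_act_mul.
Qed.

Theorem theorem6p1 (M : Semigroup) (f : MI M -> nat)
  (hf0 : f I_ = 0)
  (hf : forall m m' m'' : MI M, f m <= f (mulI (mulI m' m) m'')) :
  is_strict_length_function (@Rh_mul M) (Dfun f) /\
  exists chi : etree (@Rh_mul M) (@Rh_one M),
    strongly_faithful chi /\
    (forall s t, Dfun f s t = Dchi chi s t) /\
    (forall chi' : etree (@Rh_mul M) (@Rh_one M),
        (forall s t, Dfun f s t = Dchi chi' s t) -> etree_iso chi chi').
Proof.
  split; [apply part_i, hf|].
  exists (chi0 f hf). split; [apply chi0_sf|]. split; [apply chi0_D|].
  intros chi' HD. apply uniqueness, HD.
Qed.
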